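(* Let $(\Theta,d)$ be a connected locally compact metric space and $(X,\mathcal{B},P)$ a probability space. Let $X_1,X_2,\dots$ be i.i.d. with law $P$ and $P_n:=n^{-1}\sum_{j=1}^n\delta_{X_j}$. Let $h:X\times\Theta\to\mathbb{R}$ be such that $h(\cdot,\theta)$ is measurable for each $\theta\in\Theta$. Assume: (i) $\theta\mapsto Ph(\theta):=\int h(x,\theta)\,dP(x)\in(-\infty,+\infty]$ is well defined and uniminimal on $\Theta$, with minimum at $\theta_0$; (ii) outside events $A_n$ with $\Pr(A_n)\to0$ as $n\to\infty$, the function $\theta\mapsto P_nh(\theta):=\int h(x,\theta)\,dP_n(x)$ is uniminimal on $\Theta$; (iii) for some neighborhood $U$ of $\theta_0$, $\{h(\cdot,\theta):\theta\in U\}$ is a Glivenko–Cantelli class for $P$. Then $\theta_0$ is a definite M-limit for $P$ with respect to $h$, i.e. for every neighborhood $U$ of $\theta_0$ there is $\varepsilon>0$ such that $$(P^n)^*\Big\{\inf\{P_nh(\theta):\theta\notin U\}\le\varepsilon+\inf\{P_nh(\phi):\phi\in U\}\Big\}\to0\quad(n\to\infty),$$ where $(P^n)^*$ denotes outer probability; and $\theta_0$ is the M-functional of $P$ for $h$, i.e. $Ph(\theta)$ is defined, satisfies $-\infty<Ph(\theta)\le+\infty$ for all $\theta$, and is minimized uniquely at $\theta=\theta_0$.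
   Context: A function $f:\Theta\to(-\infty,+\infty]$ is uniminimal iff it is lower semicontinuous, has a unique relative (local) minimum at some point, and for every $t\in\mathbb{R}$ the sublevel set $\{\theta: f(\theta)\le t\}$ is connected. A class $\mathcal{F}$ of $P$-integrable functions is a Glivenko–Cantelli class for $P$ if $\sup\{|\int f\,d(P_n-P)|: f\in\mathcal{F}\}\to0$ almost surely as $n\to\infty$ (the supremum being assumed measurable). *)

(* Defs.v *)
From HB Require Import structures.
From mathcomp Require Import all_boot all_order all_algebra.
From mathcomp Require Import all_classical all_reals all_analysis.
From mathcomp Require Import measurable_realfun.
Set Implicit Arguments. Unset Strict Implicit. Unset Printing Implicit Defensive.
Import Order.TTheory GRing.Theory Num.Theory.
Import numFieldNormedType.Exports.
Local Open Scope classical_set_scope.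
Local Open Scope ring_scope.

Section Uniminimal.
Context {R : realType} {Θ : topologicalType}.
Local Open Scope ereal_scope.

Definition is_rel_min (f : Θ -> \bar R) (θ : Θ) : Prop :=
  \forall φ \near θ, f θ <= f φ.

Definition uniminimal_at (f : Θ -> \bar R) (θ0 : Θ) : Prop :=
  [/\ lower_semicontinuous f,
      (forall θ, is_rel_min f θ <-> θ = θ0) &
      (forall t : R, connected [set θ | f θ <= t%:E])].

Definition uniminimal (f : Θ -> \bar R) : Prop := exists θ0, uniminimal_at f θ0.
End Uniminimal.

Section Sample.
Context {R : realType} {dO dX : measure_display}
  {Ω : measurableType dO} {X : measurableType dX}.
Local Open Scope ereal_scope.

(* X_0, X_1, ... (the paper's X_1, X_2, ...) are i.i.d. with law P under Q *)
Definition iid (Q : probability Ω R) (P : probability X R) (Xs : nat -> Ω -> X) :=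
  (forall i, measurable_fun setT (Xs i)) /\
  forall (n : nat) (B : nat -> set X), (forall i, measurable (B i)) ->
    Q (\bigcap_(i in `I_n) (Xs i @^-1` B i)) = \prod_(i < n) P (B i).

(* the sigma-algebra generated by the first n observations X_0,...,X_{n-1}
   (the image of the measurable sets of X^n) *)
Definition sampleF (Xs : nat -> Ω -> X) (n : nat) : set (set Ω) :=
  <<s \bigcup_(i in `I_n) [set Xs i @^-1` B | B in [set B : set X | measurable B]] >>.

(* outer probability (P^n)^* of an event determined by the first n
   observations: infimum of Q(C) over covering events C measurable with
   respect to the first n observations *)
Definition outerP (Q : probability Ω R) (Xs : nat -> Ω -> X) (n : nat) (A : set Ω) : \bar R :=
  ereal_inf [set Q C | C in [set C | sampleF Xs n C /\ A `<=` C]].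

Definition Pn (Xs : nat -> Ω -> X) (n : nat) (ω : Ω) (f : X -> R) : R :=
  (n%:R^-1 * \sum_(j < n) f (Xs j ω))%R.

(* Glivenko-Cantelli class for P (supremum assumed measurable) *)
Definition GC_class (Q : probability Ω R) (P : probability X R) (Xs : nat -> Ω -> X)
    (F : set (X -> R)) : Prop :=
  let S n ω := ereal_sup [set `| (Pn Xs n ω f)%:E - \int[P]_x (f x)%:E | | f in F] in
  [/\ (forall f, F f -> P.-integrable setT (fun x => (f x)%:E)),
      (forall (n : nat) (B : set (\bar R)), measurable B -> sampleF Xs n (S n @^-1` B)) &
      {ae Q, forall ω, S ^~ ω @ \oo --> 0}].
End Sample.

(* Main.v *)
Require Import Defs.
From HB Require Import structures.
From mathcomp Require Import all_boot all_order all_algebra.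
From mathcomp Require Import all_classical all_reals all_analysis.
From mathcomp Require Import measurable_realfun.
From mathcomp Require Import lra.
Import Order.TTheory GRing.Theory Num.Theory.
Import numFieldNormedType.Exports.
Local Open Scope classical_set_scope.
Local Open Scope ring_scope.
Local Open Scope ereal_scope.

Lemma int_gtNy (R : realType) d (X : measurableType d) (P : probability X R) (g : X -> R) :
  \int[P]_x (Num.max (- g x) 0)%:E < +oo -> -oo < \int[P]_x (g x)%:E.
Proof.
move=> H; rewrite integralE.
have -> : \int[P]_(x in setT) ((EFin \o g)^\- x) = \int[P]_x (Num.max (- g x) 0)%:E.
  by rewrite funerneg.
have p0 : 0 <= \int[P]_(x in setT) ((EFin \o g)^\+ x).
  by apply: integral_ge0 => x _; exact: funepos_ge0.
apply: (lt_le_trans _ (leeB p0 (lexx _))).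
rewrite sub0e.
by rewrite lteNr.
Qed.


Lemma strict_min (R : realType) (T : topologicalType) (f : T -> \bar R) (t0 : T) :
  hausdorff_space T -> uniminimal_at f t0 -> f t0 \is a fin_num ->
  forall t, t <> t0 -> f t0 < f t.
Proof.
move=> hT [_ Hmin Hconn] c_fin t nt; rewrite ltNge; apply/negP => le.
have N0 : nbhs t0 [set p | f t0 <= f p] by apply/(Hmin t0).
have claim : forall p, (interior [set p | f t0 <= f p]) p -> f p <= f t0 -> p = t0.
  move=> p Mp lep; apply/(Hmin p); rewrite /is_rel_min.
  by apply: filterS Mp => q /= hq; exact: le_trans lep hq.
have S := Hconn (fine (f t0)).
rewrite fineK // in S.
have E := S [set t0] _ _ _.
have : [set t0] t.
  rewrite E //.
  - by exists t0.
  - exists (interior [set p | f t0 <= f p]); first exact: open_interior.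
    apply/seteqP; split => [p /= -> | p /= [hp1 hp2]]; last exact: claim.
    by split => //; exact: nbhs_interior.
  - exists [set t0]; first exact: accessible_closed_set1 (hausdorff_accessible hT) _.
    by apply/seteqP; split => [p /= -> | p /= [hp1 hp2]].
by move=> /= /nt.
Qed.

Lemma gap {R : realType} {T : topologicalType} {f : T -> \bar R} {K : set T} {c : R} :
  compact K -> lower_semicontinuous f -> (forall t, K t -> c%:E < f t) ->
  exists2 g : R, (0 < g)%R & forall t, K t -> (c + g)%:E < f t.
Proof.
move=> /compact_near_coveringP cK lsc Hc.
have := cK nat \oo (fun k t => (c + k.+1%:R^-1)%:E < f t) _.
case.
- move=> t Kt; have cr0 := Hc t Kt.
  have [k0 hk0] : exists k0 : nat, (c + k0.+1%:R^-1)%:E < f t.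
    move: cr0; case E : (f t) => [r| |] //= cr.
    + rewrite lte_fin in cr; have [k hk] := ltr_add_invr cr.
      by exists k => //=; rewrite lte_fin.
    + by exists 0%N => //=; rewrite ltry.
  have [V nV HV] := lsc t _ hk0.
  exists (V, [set k | (k0 <= k)%N]) => //=.
    by split => //=; exists k0.
  move=> [y k] /= [Vy kk]; apply: le_lt_trans (HV y Vy).
  rewrite lee_fin lerD2l lef_pV2 ?posrE// ler_nat ltnS.
  done.
- move=> k _ HK.
  by exists (k.+1%:R^-1)%R => //; apply: HK => /=.
Qed.

Lemma ae_prob (R : realType) d (O : measurableType d) (Q : probability O R)
  (S : nat -> O -> \bar R) (e : R) : (0 < e)%R ->
  (forall n, measurable [set w | e%:E <= S n w]) ->
  {ae Q, forall w, S ^~ w @ \oo --> 0} ->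
  (fun n => Q [set w | e%:E <= S n w]) @ \oo --> 0.
Proof.
move=> e0 mD [N [mN QN0 sN]].
pose D n := [set w | e%:E <= S n w].
pose E m := \bigcup_(n in [set n | (m <= n)%N]) D n.
have mE m : measurable (E m) by apply: bigcup_measurable => k _; exact: mD.
have mI : measurable (\bigcap_m E m) by apply: bigcap_measurableType.
have cE : Q \o E @ \oo --> Q (\bigcap_m E m).
  apply: nonincreasing_cvg_mu => //.
    by apply: (le_lt_trans (probability_le1 Q (mE 0%N))); rewrite ltry.
  move=> m n mn; apply/subsetPset => w [k /= km Dk]; exists k => //; exact: leq_trans mn km.
have I0 : Q (\bigcap_m E m) = 0.
  apply/eqP; rewrite -measure_le0 -QN0; apply: le_measure; rewrite ?inE //.
  move=> w Iw; apply: sN => /= cv.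
  have := cv; rewrite (@fine_cvgP _ _ _ _ _ 0%R) => -[fin cvf].
  have := cvgr_lt _ cvf e e0.
  move=> lt; have := filterI fin (lt _); case => m _ Hm.
  have [k /= km Dk] := Iw m I.
  have [fk ltk] := Hm k km.
  move: Dk; rewrite /D /= -(fineK fk) lee_fin; apply/negP; rewrite -ltNge.
  exact: ltk.
rewrite I0 in cE.
apply: (@squeeze_cvge _ _ _ R (fun=> 0) _ (Q \o E)); last exact: cE; last exact: cvg_cst.
near=> n; rewrite measure_ge0 /=; apply: le_measure; rewrite ?inE //.
by move=> w Dw; exists n => /=.
Unshelve. all: by end_near.
Qed.

Theorem theorem2 (R : realType) (Θ : pseudoMetricType R)
  (dX dO : measure_display) (X : measurableType dX) (Ω : measurableType dO)
  (P : probability X R) (Q : probability Ω R) (Xs : nat -> Ω -> X)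
  (h : X -> Θ -> R) (θ0 : Θ) :
  hausdorff_space Θ ->
  connected [set: Θ] ->
  locally_compact [set: Θ] ->
  iid Q P Xs ->
  (forall θ, measurable_fun setT (fun x => h x θ)) ->
  (* (i) Ph is well defined in (-oo,+oo] and uniminimal with minimum at θ0 *)
  (forall θ, (\int[P]_x (Num.max (- h x θ)%R 0%R)%:E < +oo)%E) ->
  uniminimal_at (fun θ => \int[P]_x (h x θ)%:E) θ0 ->
  (* (ii) outside events A_n with Pr(A_n) -> 0, P_n h is uniminimal *)
  (exists A : nat -> set Ω,
     [/\ (forall n, sampleF Xs n (A n)),
         Q \o A @ \oo --> 0%E &
         (forall n ω, ~ A n ω -> uniminimal (fun θ => (Pn Xs n ω (h ^~ θ))%:E))]) ->
  (* (iii) GC class on a neighbourhood of θ0 *)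
  (exists2 U, nbhs θ0 U & GC_class Q P Xs [set h ^~ θ | θ in U]) ->
  (* conclusion: definite M-limit ... *)
  (forall U, nbhs θ0 U -> exists2 eps : R, (0 < eps)%R &
     (fun n => outerP Q Xs n
        [set ω | (ereal_inf [set (Pn Xs n ω (h ^~ θ))%:E | θ in ~` U]
                  <= eps%:E + ereal_inf [set (Pn Xs n ω (h ^~ φ))%:E | φ in U])%E])
     @ \oo --> 0%E)
  /\ (* ... and M-functional *)
  ((forall θ, (\int[P]_x (Num.max (- h x θ)%R 0%R)%:E < +oo)%E /\
              (-oo < \int[P]_x (h x θ)%:E)%E) /\
   (forall θ, θ <> θ0 -> (\int[P]_x (h x θ0)%:E < \int[P]_x (h x θ)%:E)%E)).
Proof.
move=> hT Tconn lcT iidQ mh negint Hu [A [sA QA HA]] [V nV [GCi GCm GCae]].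
pose f := fun θ => \int[P]_x (h x θ)%:E.
have finV : forall θ, V θ -> f θ \is a fin_num.
  by move=> θ Vθ; apply: integrable_fin_num => //; apply: GCi; exists θ.
have fin0 : f θ0 \is a fin_num by apply: finV; exact: nbhs_singleton.
split; last first.
  split; first by move=> θ; split; [exact: negint | exact: int_gtNy].
  exact: strict_min.
move=> U nU.
have [K0 nK0 [cK0 clK0]] := lcT θ0 I.
rewrite withinET in nK0.
have nW : nbhs θ0 (U `&` V `&` K0) by apply: filterI => //; apply: filterI.
have [r r0 rW] := (iffLR (nbhs_ballP _ _)) nW.
pose K := closure (ball θ0 (r / 2)).
have KW : K `<=` U `&` V `&` K0.
  move=> y Ky; apply: rW.
  have r20 : (0 < r / 2)%R by rewrite divr_gt0.
  have [z [z1 z2]] := Ky _ (nbhsx_ballx y _ r20).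
  exact: ball_split z1 (ball_sym z2).
have clK : closed K by exact: closed_closure.
have cK : compact K by apply: (subclosed_compact clK cK0) => y /KW [].
have nK : nbhs θ0 K.
  apply: (filterS (@subset_closure _ _)); apply: nbhsx_ballx; by rewrite divr_gt0.
pose B := K `&` ~` K°.
have cB : compact B.
  apply: compact_closedI => //; apply: open_closedC; exact: open_interior.
pose c := fine (f θ0).
have Bc : forall t, B t -> c%:E < f t.
  move=> t [Kt nKt]; rewrite /c fineK //; apply: strict_min => //.
  by move=> tE; apply: nKt; rewrite tE.
have [lscf _ _] := Hu.
have [g g0 Bg] := gap cB lscf Bc.
pose del := (g / 4)%R.
have del0 : (0 < del)%R by rewrite divr_gt0.
exists del => //.
case: iidQ => mXs _.
pose S n w := ereal_sup [set `|(Pn Xs n w f)%:E - \int[P]_x (f x)%:E| | f in [set h^~ θ | θ in V]].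
pose D n := [set w | del%:E <= S n w].
pose C n := A n `|` D n.
have sD n : sampleF Xs n (D n).
  suff -> : D n = S n @^-1` `[del%:E, +oo[%classic by apply: GCm; exact: emeasurable_itv.
  by apply/seteqP; split => w; rewrite /= in_itv /= andbT.
have sC n : sampleF Xs n (C n).
  rewrite /C -bigcup2E; apply: sigma_algebra_bigcup => -[|[|k]] /=.
  - exact: sA.
  - exact: sD.
  - exact: sigma_algebra0.
have sFm n : sampleF Xs n `<=` measurable.
  apply: smallest_sub; first exact: sigma_algebra_measurable.
  move=> Y [i _ [Bx mB <-]]; have := (mXs i) measurableT Bx mB; by rewrite setTI.
have mD n : measurable (D n) := sFm n _ (sD n).
have mA n : measurable (A n) := sFm n _ (sA n).
have QD := @ae_prob _ _ _ Q S del del0 mD GCae.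
have key n w : ~ A n w -> ~ D n w ->
    ~ (ereal_inf [set (Pn Xs n w (h ^~ θ))%:E | θ in ~` U]
                  <= del%:E + ereal_inf [set (Pn Xs n w (h ^~ φ))%:E | φ in U]).
  move=> nA nD.
  have Slt : S n w < del%:E by rewrite ltNge; apply/negP.
  pose pn θ := Pn Xs n w (h ^~ θ).
  have close θ : V θ -> (`|pn θ - fine (f θ)| < del)%R.
    move=> Vθ; have : `|(pn θ)%:E - f θ| <= S n w.
      by apply: ereal_sup_ubound; exists (h^~θ) => //; exists θ.
    rewrite -(fineK (finV θ Vθ)) -EFinB /= => le.
    by have := le_lt_trans le Slt; rewrite lte_fin.
  have [θn [_ _ conn]] := HA n w nA.
  pose t := (pn θ0 + 2 * del)%R.
  pose Z := [set θ | (pn θ)%:E <= t%:E].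
  have ZB θ : Z θ -> ~ B θ.
    move=> Zθ Bθ; have Kθ := Bθ.1; have [[_ Vθ] _] := KW θ Kθ.
    have := Bg θ Bθ; rewrite -/(f θ) -(fineK (finV θ Vθ)) lte_fin => lt1.
    have := close θ Vθ; have := close θ0 (nbhs_singleton nV).
    move: Zθ; rewrite /Z /= lee_fin /t /del /c => Z1.
    rewrite !ltr_norml => /andP[a1 a2] /andP[b1 b2].
    move: lt1; rewrite /c; lra.
  have ZK : Z `<=` K.
    have E : Z `&` K° = Z.
      apply: conn.
      - exists θ0; split; last exact: nK.
        by rewrite /Z /= lee_fin /t lerDl; apply: mulr_ge0 => //; exact: ltW.
      - by exists K°; [exact: open_interior|].
      - exists K => //; apply/seteqP; split => x [Zx Kx]; split => //.
          exact: interior_subset.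
        have [//|nKx] := pselect (K° x).
        by exfalso; exact: ZB x Zx (conj Kx nKx).
    by move=> x Zx; rewrite -E in Zx; exact: interior_subset Zx.2.
  move=> bad.
  have lb : t%:E <= ereal_inf [set (pn θ)%:E | θ in ~` U].
    apply: le_ereal_inf_tmp => y [θ nUθ <-]; rewrite leNgt; apply/negP => lt.
    by apply: nUθ; have [[] ] := KW θ (ZK θ (ltW lt)).
  have ub : ereal_inf [set (pn φ)%:E | φ in U] <= (pn θ0)%:E.
    by apply: ereal_inf_lbound; exists θ0 => //; exact: nbhs_singleton.
  have := le_trans lb (le_trans bad (leeD2l del%:E ub)).
  rewrite -EFinD lee_fin /t; lra.
apply: (@squeeze_cvge _ _ _ R (fun=> 0) _ (fun n => Q (A n) + Q (D n))).
- near=> n; apply/andP; split.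
    by apply: le_ereal_inf_tmp => y [Y _ <-]; exact: measure_ge0.
  apply: (le_trans (ereal_inf_lbound _)).
    exists (C n) => //; split => // w bad.
    have [|nA] := pselect (A n w); first by left.
    have [|nD] := pselect (D n w); first by right.
    by exfalso; exact: key n w nA nD bad.
  exact: measureU2.
- exact: cvg_cst.
- rewrite -[X in _ --> X](adde0 0); apply: cvgeD => //.
Unshelve. all: by end_near.
Qed.
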